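(* Each of the following representations $\zeta_i:\mathrm{TVB}_2\to\mathrm{GL}_3(\mathbb{C})$, $1\le i\le 8$ (for every admissible choice of parameters), is unfaithful, i.e. not injective: \begin{itemize} \item[(1)] $\zeta_1(\sigma_1)=\begin{pmatrix} d & b\\ b/x^2 & d\end{pmatrix}\oplus 1$, $\zeta_1(\rho_1)=\begin{pmatrix} 0 & x\\ 1/x & 0\end{pmatrix}\oplus 1$, $\zeta_1(\gamma_1)=\mathrm{diag}(-1,1,1)$, $\zeta_1(\gamma_2)=\mathrm{diag}(1,-1,1)$, where $b,d,x\in\mathbb{C}$, $b^2-d^2x^2\neq 0$, $x\neq 0$. \item[(2)] $\zeta_2(\sigma_1)=\begin{pmatrix} \frac{2bw+dx}{x} & b\\ \frac{b-bw^2}{x^2} & d\end{pmatrix}\oplus 1$, $\zeta_2(\rho_1)=\begin{pmatrix} w & x\\ \frac{1-w^2}{x} & -w\end{pmatrix}\oplus 1$, $\zeta_2(\gamma_1)=\zeta_2(\gamma_2)=I_3$, where $b,d,w,x\in\mathbb{C}$, $x\neq 0$, $dx+bw\neq \pm b$. \item[(3)] $\zeta_3(\sigma_1)=\begin{pmatrix} a & b\\ c & d\end{pmatrix}\oplus 1$, $\zeta_3(\rho_1)=\mathrm{diag}(-1,-1,1)$, $\zeta_3(\gamma_1)=\zeta_3(\gamma_2)=I_3$, $ad-bc\neq 0$. \item[(4)] $\zeta_4(\sigma_1)=\begin{pmatrix} a & b\\ c & d\end{pmatrix}\oplus 1$, $\zeta_4(\rho_1)=\zeta_4(\gamma_1)=\zeta_4(\gamma_2)=I_3$,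 $ad-bc\neq 0$. \item[(5)] $\zeta_5(\sigma_1)=\begin{pmatrix} a & 0\\ c & d\end{pmatrix}\oplus 1$, $\zeta_5(\rho_1)=\begin{pmatrix} -1 & 0\\ \frac{2c}{d-a} & 1\end{pmatrix}\oplus 1$, $\zeta_5(\gamma_1)=\zeta_5(\gamma_2)=I_3$, $ad\neq 0$, $a\neq d$. \item[(6)] $\zeta_6(\sigma_1)=\begin{pmatrix} a & 0\\ c & d\end{pmatrix}\oplus 1$, $\zeta_6(\rho_1)=\begin{pmatrix} 1 & 0\\ \frac{2c}{a-d} & -1\end{pmatrix}\oplus 1$, $\zeta_6(\gamma_1)=\zeta_6(\gamma_2)=I_3$, $ad\neq 0$, $a\neq d$. \item[(7)] $\zeta_7(\sigma_1)=\mathrm{diag}(d,d,1)$, $\zeta_7(\rho_1)=\begin{pmatrix} 1 & 0\\ y & -1\end{pmatrix}\oplus 1$, $\zeta_7(\gamma_1)=\zeta_7(\gamma_2)=I_3$, $d\neq 0$. \item[(8)] $\zeta_8(\sigma_1)=\mathrm{diag}(d,d,1)$, $\zeta_8(\rho_1)=\begin{pmatrix} -1 & 0\\ y & 1\end{pmatrix}\oplus 1$, $\zeta_8(\gamma_1)=\zeta_8(\gamma_2)=I_3$, $d\neq 0$. \end{itemize} (All parameters are complex numbers.)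
   Context: The twisted virtual braid group $\mathrm{TVB}_2$ is the group with generators $\sigma_1,\rho_1,\gamma_1,\gamma_2$ and defining relations $\rho_1^2=1$, $\gamma_1^2=\gamma_2^2=1$, $\gamma_1\gamma_2=\gamma_2\gamma_1$, $\rho_1\gamma_1=\gamma_2\rho_1$, $\rho_1\sigma_1\rho_1=\gamma_2\gamma_1\sigma_1\gamma_1\gamma_2$. For a $2\times 2$ matrix $M$, $M\oplus 1$ denotes the $3\times3$ block-diagonal matrix with blocks $M$ and $1$. A representation is faithful if it is injective. *)

(* Defs.v *)
From mathcomp Require Import all_boot all_algebra.
From mathcomp Require Import complex Rstruct.
Set Implicit Arguments. Unset Strict Implicit. Unset Printing Implicit Defensive.
Import GRing.Theory.
Local Open Scope ring_scope.

Definition C : Type := Rdefinitions.R[i].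

Inductive gen := sig1 | rho1 | gam1 | gam2.

(* a letter is a generator with an exponent sign: (g, false) = g, (g, true) = g^-1 *)
Definition letter := (gen * bool)%type.
Definition word := list letter.

Definition g_ (g : gen) : letter := (g, false).
Definition gi_ (g : gen) : letter := (g, true).
Definition inv_letter (l : letter) : letter := (l.1, ~~ l.2).

(* defining relators (relation u = v is encoded as the relator u v^-1) *)
Definition relators : list word :=
  [:: [:: g_ rho1; g_ rho1];
      [:: g_ gam1; g_ gam1];
      [:: g_ gam2; g_ gam2];
      [:: g_ gam1; g_ gam2; gi_ gam1; gi_ gam2];
      [:: g_ rho1; g_ gam1; gi_ rho1; gi_ gam2];
      (* rho1 sig1 rho1 = gam2 gam1 sig1 gam1 gam2 *)
      [:: g_ rho1; g_ sig1; g_ rho1;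
          gi_ gam2; gi_ gam1; gi_ sig1; gi_ gam1; gi_ gam2] ].

Inductive tvb_eq : word -> word -> Prop :=
| tvb_refl w : tvb_eq w w
| tvb_sym u v : tvb_eq u v -> tvb_eq v u
| tvb_trans u v w : tvb_eq u v -> tvb_eq v w -> tvb_eq u w
| tvb_free u v (l : letter) : tvb_eq (u ++ l :: inv_letter l :: v) (u ++ v)
| tvb_rel u v r : List.In r relators -> tvb_eq (u ++ r ++ v) (u ++ v).

Definition mx_of_letter (rep : gen -> 'M[C]_3) (l : letter) : 'M[C]_3 :=
  if l.2 then invmx (rep l.1) else rep l.1.

Definition eval_word (rep : gen -> 'M[C]_3) (w : word) : 'M[C]_3 :=
  foldr (fun l acc => mx_of_letter rep l *m acc) 1%:M w.

Definition unfaithful (rep : gen -> 'M[C]_3) : Prop :=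
  exists w : word, ~ tvb_eq w [::] /\ eval_word rep w = 1%:M.

Definition mx2 (a b c d : C) : 'M[C]_2 :=
  \matrix_(i < 2, j < 2)
    if i == 0 :> nat then (if j == 0 :> nat then a else b)
    else (if j == 0 :> nat then c else d).

Definition oplus1 (M : 'M[C]_2) : 'M[C]_3 :=
  \matrix_(i < 3, j < 3)
    if (i < 2)%N && (j < 2)%N then M (inord i) (inord j)
    else (i == j :> nat)%:R.

Definition diag3 (a b c : C) : 'M[C]_3 :=
  \matrix_(i < 3, j < 3)
    if i == j :> nat then (if i == 0 :> nat then a else if i == 1 :> nat then b else c)
    else 0.

Definition mkrep (s r g1 g2 : 'M[C]_3) (g : gen) : 'M[C]_3 :=
  match g with sig1 => s | rho1 => r | gam1 => g1 | gam2 => g2 end.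

Definition zeta1 (b d x : C) : gen -> 'M[C]_3 :=
  mkrep (oplus1 (mx2 d b (b / x ^+ 2) d)) (oplus1 (mx2 0 x (1 / x) 0))
        (diag3 (-1) 1 1) (diag3 1 (-1) 1).

Definition zeta2 (b d w x : C) : gen -> 'M[C]_3 :=
  mkrep (oplus1 (mx2 ((2 * b * w + d * x) / x) b ((b - b * w ^+ 2) / x ^+ 2) d))
        (oplus1 (mx2 w x ((1 - w ^+ 2) / x) (- w)))
        1%:M 1%:M.

Definition zeta3 (a b c d : C) : gen -> 'M[C]_3 :=
  mkrep (oplus1 (mx2 a b c d)) (diag3 (-1) (-1) 1) 1%:M 1%:M.

Definition zeta4 (a b c d : C) : gen -> 'M[C]_3 :=
  mkrep (oplus1 (mx2 a b c d)) 1%:M 1%:M 1%:M.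

Definition zeta5 (a c d : C) : gen -> 'M[C]_3 :=
  mkrep (oplus1 (mx2 a 0 c d)) (oplus1 (mx2 (-1) 0 (2 * c / (d - a)) 1)) 1%:M 1%:M.

Definition zeta6 (a c d : C) : gen -> 'M[C]_3 :=
  mkrep (oplus1 (mx2 a 0 c d)) (oplus1 (mx2 1 0 (2 * c / (a - d)) (-1))) 1%:M 1%:M.

Definition zeta7 (d y : C) : gen -> 'M[C]_3 :=
  mkrep (diag3 d d 1) (oplus1 (mx2 1 0 y (-1))) 1%:M 1%:M.

Definition zeta8 (d y : C) : gen -> 'M[C]_3 :=
  mkrep (diag3 d d 1) (oplus1 (mx2 (-1) 0 y 1)) 1%:M 1%:M.

(* Main.v *)
Require Import Defs.
From mathcomp Require Import all_boot all_algebra.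
From mathcomp Require Import complex Rstruct.
From mathcomp Require Import ring.
Import GRing.Theory.
Local Open Scope ring_scope.

Definition pm (l : letter) (p : nat) : nat :=
  match l.1 with
  | sig1 => match p with 0 => 3 | 3 => 0 | _ => p end
  | rho1 => match p with 0 => 2 | 1 => 3 | 2 => 0 | 3 => 1 | _ => p end
  | gam1 => match p with 0 => 1 | 1 => 0 | _ => p end
  | gam2 => match p with 2 => 3 | 3 => 2 | _ => p end
  end%N.

Definition act (w : word) (p : nat) : nat := foldr pm p w.

Lemma act_cat u v p : act (u ++ v) p = act u (act v p).
Proof. by elim: u => //= l u ->. Qed.

Lemma pm_invol l p : pm l (pm l p) = p.
Proof. by case: l => [[] b]; case: p => [|[|[|[|p]]]]. Qed.

Lemma rel_id r : List.In r relators -> forall p, act r p = p.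
Proof.
by move=> /= [<-|[<-|[<-|[<-|[<-|[<-|[]]]]]]] p; case: p => [|[|[|[|p]]]].
Qed.

Lemma tvb_act u v : tvb_eq u v -> forall p, act u p = act v p.
Proof.
move=> H; induction H as [w|u v _ IH|u v w _ IH1 _ IH2|u v l|u v r Hr] => p.
- by [].
- by rewrite IH.
- by rewrite IH1 IH2.
- by rewrite !act_cat; congr (act u _); exact: pm_invol.
- by rewrite !act_cat (rel_id _ Hr).
Qed.

Lemma nontriv w p : act w p <> p -> ~ tvb_eq w [::].
Proof. by move=> H /tvb_act E; apply: H; rewrite E. Qed.

Definition wcomm : word := [:: g_ sig1; g_ gam1; g_ gam2; gi_ sig1; gi_ gam2; gi_ gam1].

Lemma wcomm_nt : ~ tvb_eq wcomm [::].
Proof. by apply: (@nontriv _ 0%N). Qed.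
Lemma wg_nt : ~ tvb_eq [:: g_ gam1] [::].
Proof. by apply: (@nontriv _ 0%N). Qed.
Lemma wr_nt : ~ tvb_eq [:: g_ rho1] [::].
Proof. by apply: (@nontriv _ 0%N). Qed.

Lemma oplus1_mul (M N : 'M[C]_2) : oplus1 M *m oplus1 N = oplus1 (M *m N).
Proof.
have E0 : widen_ord (leqnSn 1) ord_max = inord 0 :> 'I_2 by apply/val_inj; rewrite /= inordK.
have E1 : ord_max = inord 1 :> 'I_2 by apply/val_inj; rewrite /= inordK.
apply/matrixP => i j; rewrite !mxE !big_ord_recr big_ord0 /= !mxE.
case: i => [[|[|[|i]]] Hi] //; case: j => [[|[|[|j]]] Hj] //=.
all: rewrite ?mxE ?big_ord_recr ?big_ord0 /=.
all: rewrite ?E0 ?E1 ?mul0r ?mulr0 ?add0r ?addr0 ?mul1r ?mulr1 //.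
Qed.

Lemma mx2_mul a b c d e f g h :
  mx2 a b c d *m mx2 e f g h = mx2 (a*e+b*g) (a*f+b*h) (c*e+d*g) (c*f+d*h).
Proof.
apply/matrixP => i j; rewrite !mxE !big_ord_recr big_ord0 /= !mxE.
by case: i => [[|[|i]] Hi] //; case: j => [[|[|j]] Hj] //=; rewrite add0r.
Qed.

Lemma diag3_oplus a b : diag3 a b 1 = oplus1 (mx2 a 0 0 b).
Proof.
apply/matrixP => i j; rewrite !mxE.
case: i => [[|[|[|i]]] Hi] //; case: j => [[|[|[|j]]] Hj] //=; rewrite ?mxE ?inordK //.
Qed.

Lemma oplus1_1 : oplus1 (mx2 1 0 0 1) = 1%:M.
Proof.
apply/matrixP => i j; rewrite !mxE.
case: i => [[|[|[|i]]] Hi] //; case: j => [[|[|[|j]]] Hj] //=; rewrite ?mxE ?inordK //.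
Qed.

Lemma invmx_invol (A : 'M[C]_3) : A *m A = 1%:M -> invmx A = A.
Proof.
move=> H; have [U _] := mulmx1_unit H.
by rewrite -[LHS]mulmx1 -H mulmxA mulVmx // mul1mx.
Qed.

Lemma diag3_mul a b a' b' : diag3 a b 1 *m diag3 a' b' 1 = diag3 (a*a') (b*b') 1.
Proof.
rewrite !diag3_oplus oplus1_mul mx2_mul; congr (oplus1 (mx2 _ _ _ _)); ring.
Qed.

Lemma diag3_1 : diag3 1 1 1 = 1%:M.
Proof. by rewrite diag3_oplus oplus1_1. Qed.

Lemma z1_part (b d x : C) : b ^+ 2 - d ^+ 2 * x ^+ 2 != 0 -> x != 0 ->
     unfaithful (zeta1 b d x).
Proof.
move=> Hdet Hx; exists wcomm; split; first exact: wcomm_nt.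
rewrite /eval_word /= mulmx1 /mx_of_letter /= /zeta1 /=.
set S := oplus1 _.
rewrite [invmx (diag3 1 _ _)]invmx_invol; last by rewrite diag3_mul mulrNN mulr1 diag3_1.
rewrite [invmx (diag3 (-1) _ _)]invmx_invol; last by rewrite diag3_mul mulrNN mulr1 diag3_1.
rewrite [diag3 1 _ _ *m diag3 _ _ _]diag3_mul [diag3 (-1) _ _ *m (_ *m _)]mulmxA diag3_mul.
rewrite !mulr1 !mul1r.
set Z := diag3 _ _ _.
have ZS : Z *m S = S *m Z.
  rewrite /Z diag3_oplus /S !oplus1_mul !mx2_mul; congr (oplus1 (mx2 _ _ _ _)); ring.
have ZZ : Z *m Z = 1%:M by rewrite diag3_mul mulrNN mulr1 diag3_1.
set S' := oplus1 (mx2 (d / (d^+2 - b^+2/x^+2)) (- b / (d^+2 - b^+2/x^+2))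
                     (- (b / x^+2) / (d^+2 - b^+2/x^+2)) (d / (d^+2 - b^+2/x^+2))).
have SS : S *m S' = 1%:M.
  rewrite /S /S' oplus1_mul mx2_mul -oplus1_1.
  have HD' : (d * x) ^+ 2 - b ^+ 2 != 0 by rewrite -oppr_eq0 opprB exprMn.
  congr (oplus1 (mx2 _ _ _ _)).
1-4: by field; rewrite HD' Hx.

have [U _] := mulmx1_unit SS.
by rewrite mulmxA -ZS -mulmxA (mulmxA S) mulmxV // mul1mx ZZ.
Qed.

Theorem theorem3p2 :
  (forall b d x : C, b ^+ 2 - d ^+ 2 * x ^+ 2 != 0 -> x != 0 ->
     unfaithful (zeta1 b d x)) /\
  (forall b d w x : C, x != 0 -> d * x + b * w != b -> d * x + b * w != - b ->
     unfaithful (zeta2 b d w x)) /\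
  (forall a b c d : C, a * d - b * c != 0 -> unfaithful (zeta3 a b c d)) /\
  (forall a b c d : C, a * d - b * c != 0 -> unfaithful (zeta4 a b c d)) /\
  (forall a c d : C, a * d != 0 -> a != d -> unfaithful (zeta5 a c d)) /\
  (forall a c d : C, a * d != 0 -> a != d -> unfaithful (zeta6 a c d)) /\
  (forall d y : C, d != 0 -> unfaithful (zeta7 d y)) /\
  (forall d y : C, d != 0 -> unfaithful (zeta8 d y)).
Proof.
split; first exact: z1_part.
split; last split; last split; last split; last split; last split.
1,2,4-7: by move=> *; exists [:: g_ gam1]; split; [exact: wg_nt | rewrite /eval_word /= mulmx1].
by move=> *; exists [:: g_ rho1]; split; [exact: wr_nt | rewrite /eval_word /= mulmx1].
Qed.
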